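(* Let $G$ be a finite group acting on a closed connected manifold $M$, let $\ell$ be a prime, and suppose the action of $G$ on $M$ is $\mathbb{F}_\ell$-homologically wide. Then for every subgroup $H_1\le G$, the $\mathbb{F}_\ell[G]$-module $(\mathrm{Ind}^G_{H_1}\mathbf{1})\otimes_{\mathbb{Z}}\mathbb{F}_\ell$ is an $\mathbb{F}_\ell[G]$-submodule of $\mathrm{H}_1(M,\mathbb{F}_\ell)$; and if $\ell$ does not divide $|G|$, it is also a quotient $\mathbb{F}_\ell[G]$-module of $\mathrm{H}_1(M,\mathbb{F}_\ell)$.
   Context: The action of $G$ on $M$ is $\mathbb{F}_\ell$-homologically wide if the representation of $G$ on $\mathrm{H}_1(M,\mathbb{F}_\ell)$ induced by the action contains the regular representation $\mathbb{F}_\ell[G]$, i.e. there is $\omega\in\mathrm{H}_1(M,\mathbb{F}_\ell)$ with the $|G|$ classes $g\omega$ ($g\in G$) linearly independent. $\mathrm{Ind}^G_{H_1}\mathbf{1}$ is the permutation module $\mathbb{Z}[G/H_1]$. *)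

(* Defs.v *)
From HB Require Import structures.
From mathcomp Require Import all_boot all_order all_algebra all_fingroup all_solvable all_field all_character.
Set Implicit Arguments. Unset Strict Implicit. Unset Printing Implicit Defensive.
Import GRing.Theory.
Local Open Scope ring_scope.

(* Representations act on ROW vectors on the right: v |-> v *m rG g
   (mathcomp convention, rG (x * y) = rG x *m rG y). *)

Section Defs.
Variables (F : fieldType) (gT : finGroupType) (G : {group gT}).

(* The F[G]-module H_1(M,F) is modelled by an arbitrary finite-dimensional
   representation rG of G over F.  "Homologically wide": there is w such that
   the |G| vectors w.g (g in G) are linearly independent. *)
Definition homologically_wide n (rG : mx_representation F G n) : Prop :=
  exists w : 'rV[F]_n,
    row_free (\matrix_(i < #|G|) (w *m rG (enum_val (A := G) i))).

(* The permutation module F[H\G] = (Ind_H^G 1) (x)_Z F, with basis the right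
   cosets H x (x in G); g in G acts on basis row vectors by H x |-> H x g. *)
Definition coset_of_idx (H : {group gT}) (i : 'I_#|rcosets H G|) : {set gT} :=
  enum_val (A := rcosets H G) i.
Arguments coset_of_idx H i : clear implicits.

Definition perm_module_mx (H : {group gT}) (g : gT) :
    'M[F]_(#|rcosets H G|) :=
  \matrix_(i < #|rcosets H G|, j < #|rcosets H G|) (((coset_of_idx H i :* g)%g == coset_of_idx H j)%:R).

Definition perm_is_submodule n (rG : mx_representation F G n) (H : {group gT})
    : Prop :=
  exists U : 'M[F]_(#|rcosets H G|, n),
    row_free U /\ forall g, g \in G -> perm_module_mx H g *m U = U *m rG g.

Definition perm_is_quotient n (rG : mx_representation F G n) (H : {group gT})
    : Prop :=
  exists Q : 'M[F]_(n, #|rcosets H G|),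
    row_full Q /\ forall g, g \in G -> rG g *m Q = Q *m perm_module_mx H g.

End Defs.

(* Main.v *)
Require Import Defs.
From HB Require Import structures.
From mathcomp Require Import all_boot all_order all_algebra all_fingroup all_solvable all_field all_character.
Set Implicit Arguments. Unset Strict Implicit. Unset Printing Implicit Defensive.
Import GRing.Theory.
Local Open Scope ring_scope.

Section Main.
Variables (F : fieldType) (gT : finGroupType) (G H : {group gT}) (n : nat).
Variable rG : mx_representation F G n.
Hypothesis sHG : H \subset G.

Local Notation N := #|rcosets H G|.
Local Notation C := (@coset_of_idx gT G H).
Local Notation P := (perm_module_mx F G H).

Lemma coset_in i : C i \in rcosets H G.
Proof. exact: enum_valP. Qed.

Lemma rcoset_sub x : x \in G -> (H :* x)%g \subset G.
Proof.
move=> xG; apply/subsetP => y; rewrite mem_rcoset => hy.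
by rewrite -(mulgKV x y) groupM // (subsetP sHG).
Qed.

Lemma coset_sub i : C i \subset G.
Proof. by have /rcosetsP[x xG ->] := coset_in i; exact: rcoset_sub. Qed.

Lemma coset_mul i g : g \in G -> (C i :* g)%g \in rcosets H G.
Proof.
move=> gG; have /rcosetsP[x xG ->] := coset_in i.
by apply/rcosetsP; exists (x * g)%g; rewrite ?groupM // rcosetM.
Qed.

Variable w : 'rV[F]_n.
Definition u (A : {set gT}) : 'rV[F]_n := \sum_(y in A) w *m rG y.
Definition U : 'M[F]_(N, n) := \matrix_(i < N) u (C i).

Lemma u_mul (A : {set gT}) g : A \subset G -> g \in G -> u (A :* g)%g = u A *m rG g.
Proof.
move=> sAG gG; rewrite /u mulmx_suml.
rewrite (reindex_inj (mulIg g)) /=.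
have mA x : ((x * g)%g \in (A :* g)%g) = (x \in A) by rewrite mem_rcoset mulgK.
apply: eq_big => x; first exact: mA.
rewrite mA => xA; rewrite repr_mxM ?mulmxA //; exact: (subsetP sAG).
Qed.

Lemma perm_row g i : g \in G -> row i (P g *m U) = u (C i :* g)%g.
Proof.
move=> gG; rewrite row_mul mulmx_sum_row.
pose j0 := enum_rank_in (coset_in i) (C i :* g)%g.
have Cj0 : C j0 = (C i :* g)%g by rewrite /coset_of_idx enum_rankK_in //; exact: coset_mul.
rewrite (bigD1 j0) //= big1 ?addr0.
  by rewrite mxE mxE Cj0 eqxx scale1r /U rowK Cj0.
move=> j nj; rewrite mxE mxE -Cj0.
case: eqP => [/enum_val_inj E|]; last by rewrite scale0r.
by rewrite E eqxx in nj.
Qed.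

Lemma U_equiv g : g \in G -> P g *m U = U *m rG g.
Proof.
move=> gG; apply/row_matrixP => i.
by rewrite perm_row // row_mul /U rowK u_mul // coset_sub.
Qed.

Definition W : 'M[F]_(#|G|, n) := \matrix_(i < #|G|) (w *m rG (enum_val (A := G) i)).
Hypothesis Wfree : row_free W.

Definition S : 'M[F]_(N, #|G|) := \matrix_(i, j) ((enum_val (A := G) j \in C i)%:R).

Lemma U_SW : U = S *m W.
Proof.
apply/row_matrixP => i; rewrite row_mul mulmx_sum_row /U rowK /u.
have -> : \sum_(y in C i) w *m rG y = \sum_(y in G | y \in C i) w *m rG y.
  apply: eq_bigl => y; case yC: (y \in C i); last by rewrite andbF.
  by rewrite (subsetP (coset_sub i)).
rewrite big_enum_val_cond big_mkcond /=; apply: eq_bigr => j _.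
by rewrite !mxE rowK; case: (_ \in _); rewrite ?scale1r ?scale0r.
Qed.

Lemma S_free : row_free S.
Proof.
apply/row_freeP.
exists (\matrix_(j, k) ((enum_val (A := G) j == repr (C k))%:R)).
apply/matrixP => i k; rewrite !mxE.
have rC : repr (C k) \in C k.
  have /rcosetsP[x xG ->] := coset_in k; apply: mem_repr (rcoset_refl H x).
have rG1 : repr (C k) \in G by rewrite (subsetP (coset_sub k)).
pose j0 := enum_rank_in rG1 (repr (C k)).
have ej0 : enum_val j0 = repr (C k) by rewrite enum_rankK_in.
rewrite (bigD1 j0) //= big1 ?addr0.
  rewrite !mxE ej0 eqxx mulr1.
  case: (eqVneq i k) => [->|nik]; first by rewrite rC.
  case rCi: (repr (C k) \in C i) => //; exfalso.
  move/eqP: nik; apply; apply/enum_val_inj.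
  have /rcosetsP[x xG Ex] := coset_in i; have /rcosetsP[y yG Ey] := coset_in k.
  rewrite -/(C i) -/(C k).
  move: rCi rC; rewrite Ex Ey => /rcoset_eqP E1 /rcoset_eqP E2; by rewrite -E1.
move=> j nj; rewrite !mxE; case: eqP; last by rewrite mulr0.
by rewrite -ej0 => /enum_val_inj E; rewrite E eqxx in nj.
Qed.

Lemma U_free : row_free U.
Proof.
have /row_freeP[B SB] := S_free; have /row_freeP[B' WB] := Wfree.
by apply/row_freeP; exists (B' *m B); rewrite U_SW mulmxA -(mulmxA S) WB mulmx1.
Qed.

Lemma P_mul g h : g \in G -> h \in G -> P (g * h)%g = P g *m P h.
Proof.
move=> gG hG; apply: (row_free_inj U_free) => /=.
rewrite U_equiv ?groupM // repr_mxM // mulmxA -U_equiv // -mulmxA -U_equiv //. exact: mulmxA.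
Qed.

Lemma P_1 : P 1%g = 1%:M.
Proof.
apply: (row_free_inj U_free) => /=.
by rewrite U_equiv // repr_mx1 mulmx1 mul1mx.
Qed.

Hypothesis hG : (#|G|%:R : F) != 0.

Lemma quotient_exists : exists Q : 'M[F]_(n, N),
    row_full Q /\ forall g, g \in G -> rG g *m Q = Q *m P g.
Proof.
have /row_freeP[P0 UP0] := U_free.
pose Q0 := \sum_(g in G) rG (g^-1)%g *m P0 *m P g.
exists (#|G|%:R^-1 *: Q0); split.
  apply/row_fullP; exists U; rewrite -scalemxAr /Q0 mulmx_sumr.
  rewrite (eq_bigr (fun _ => 1%:M)) ?sumr_const.
    rewrite -scaler_nat scalerA mulVf // scale1r //.
  move=> g gG; rewrite !mulmxA -U_equiv ?groupV // -(mulmxA (P _)) UP0 mulmx1.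
  by rewrite -P_mul ?groupV // mulVg P_1.
move=> h hG'; rewrite -scalemxAr -scalemxAl; congr (_ *: _).
rewrite /Q0 mulmx_sumr mulmx_suml (reindex_inj (mulIg h)) /=.
apply: eq_big => x; first by rewrite groupMr.
rewrite groupMr // => xG; rewrite !mulmxA -repr_mxM ?groupV ?groupM //.
by rewrite invMg mulKVg P_mul ?groupV // !mulmxA.
Qed.

End Main.

Theorem lemma7p2 (gT : finGroupType) (G : {group gT}) (ell n : nat)
    (rG : mx_representation 'F_ell G n) :
  prime ell ->
  homologically_wide rG ->
  forall H1 : {group gT}, H1 \subset G ->
    perm_is_submodule rG H1 /\
    (~~ (ell %| #|G|)%N -> perm_is_quotient rG H1).
Proof.
move=> pr [w Wf] H1 sHG; split.
  exists (U H1 rG w); split; first exact: (U_free sHG Wf).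
  move=> g gG; exact: (@U_equiv (GRing.Field.clone _ 'F_ell) _ G H1 n rG sHG w g gG).
move=> ndvd.
have hG : (#|G|%:R : 'F_ell) != 0 by rewrite -(dvdn_pcharf (pchar_Fp pr)).
exact: (@quotient_exists (GRing.Field.clone _ 'F_ell) _ G H1 n rG sHG w Wf hG).
Qed.
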